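(* Let $n\ge 3$ be odd and consider the path $P_n$ with vertices $u_1,\dots,u_n$ and edges $\{u_j,u_{j+1}\}$, $1\le j\le n-1$. Let $\alpha\neq0$ be real, give the edge $\{u_1,u_2\}$ weight $1/\alpha$ and all other edges weight $1$. If $|\alpha|>\sqrt{(n-1)/2}$, then the end vertex $u_1$ is sedentary.
   Context: For a weighted graph with weighted adjacency matrix $A$ (entries equal to edge weights, $0$ for non-adjacent pairs), the transition matrix is $U(t)=e^{itA}$. A vertex $u$ is sedentary if $\inf_{t>0}|U(t)_{u,u}|\ge C$ for some constant $0<C\le1$. *)

(* Defs.v *)
From HB Require Import structures.
From mathcomp Require Import all_boot all_order all_algebra.
From mathcomp Require Import all_classical all_reals all_analysis.
Set Implicit Arguments. Unset Strict Implicit. Unset Printing Implicit Defensive.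
Import Order.TTheory GRing.Theory Num.Theory.
Import numFieldNormedType.Exports.
Local Open Scope ring_scope.

Section Defs.
Variable R : realType.

Definition mxpow (n : nat) (A : 'M[R]_n) (k : nat) : 'M[R]_n :=
  iter k (mulmx A) 1%:M.

(* U(t) = e^{itA} = \sum_k (i t)^k / k! A^k.  Since A is real, the entry
   U(t)_{u,v} is the complex number  Ure + i Uim  where, using
   i^k = (-1)^(k/2) for k even and i^k = i (-1)^((k-1)/2) for k odd: *)
Definition Ure (n : nat) (A : 'M[R]_n) (t : R) (u v : 'I_n) : R :=
  limn (series (fun k : nat =>
     (if odd k then 0 else (-1) ^+ k./2 * t ^+ k / (k`!)%:R * mxpow A k u v))).

Definition Uim (n : nat) (A : 'M[R]_n) (t : R) (u v : 'I_n) : R :=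
  limn (series (fun k : nat =>
     (if odd k then (-1) ^+ k./2 * t ^+ k / (k`!)%:R * mxpow A k u v else 0))).

Definition Uabs (n : nat) (A : 'M[R]_n) (t : R) (u v : 'I_n) : R :=
  Num.sqrt (Ure A t u v ^+ 2 + Uim A t u v ^+ 2).

Definition sedentary (n : nat) (A : 'M[R]_n) (u : 'I_n) : Prop :=
  exists C : R, 0 < C /\ C <= 1 /\ forall t : R, 0 < t -> C <= Uabs A t u u.

(* weighted path P_n on vertices 0..n-1 (vertex i = u_{i+1}); edge {u_1,u_2}
   has weight 1/alpha, all other edges weight 1 *)
Definition path_weighted (n : nat) (alpha : R) : 'M[R]_n :=
  \matrix_(i < n, j < n)
    if (i.+1 == j :> nat) || (j.+1 == i :> nat) then
      (if ((i : nat) == 0%N) || ((j : nat) == 0%N) then alpha^-1 else 1)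
    else 0.
End Defs.

(* Main.v *)
Require Import Defs.
From HB Require Import structures.
From mathcomp Require Import all_boot all_order all_algebra.
From mathcomp Require Import all_classical all_reals all_analysis.
From mathcomp Require Import ring lra zify.
Import Order.TTheory GRing.Theory Num.Theory.
Import numFieldNormedType.Exports.
Local Open Scope ring_scope.
Local Open Scope classical_set_scope.

Section Gen.
Variable R : realType.

Lemma pseries_fact_cvg (b : nat -> R) (M B x : R) : 0 <= B ->
  (forall k, `|b k| <= M * B ^+ k) -> cvgn (pseries (fun k => b k / k`!%:R) x).
Proof.
move=> B0 hb.
have M0 : 0 <= M by have := hb 0%N; rewrite expr0 mulr1; apply: le_trans.
apply: normed_cvg.
apply: (@series_le_cvg R _ (fun k => M * exp_coeff (B * `|x|) k)).
- by move=> k; apply: normr_ge0.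
- by move=> k; rewrite /exp_coeff /= mulr_ge0 // divr_ge0 // exprn_ge0 // mulr_ge0.
- move=> k; rewrite /exp_coeff /= !normrM normfV normrX [`|k`!%:R|]ger0_norm //.
  rewrite [X in _ <= X](_ : _ = (M * B ^+ k) * (`|x| ^+ k / k`!%:R)); last by rewrite exprMn !mulrA.
  rewrite mulrAC -mulrA.
  by apply: ler_wpM2r; [rewrite divr_ge0 // exprn_ge0 | exact: hb].
- have := is_cvg_seriesZ (k := M) (is_cvg_series_exp_coeff (B * `|x|)).
  by congr (cvgn _).
Qed.

Arguments pseries_fact_cvg {b M B x}.

Lemma pseries_diffs_fact (b : nat -> R) :
  pseries_diffs (fun k => b k / k`!%:R) = (fun k => b k.+1 / k`!%:R).
Proof.
apply/funext => k; rewrite /pseries_diffs factS natrM invfM.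
by rewrite mulrCA mulVKf // pnatr_eq0.
Qed.

Lemma pseries_fact_derive (b : nat -> R) (M B : R) t : 0 <= B ->
  (forall k, `|b k| <= M * B ^+ k) ->
  is_derive t (1:R) (fun x => limn (pseries (fun k => b k / k`!%:R) x))
    (limn (pseries (fun k => b k.+1 / k`!%:R) t)).
Proof.
move=> B0 hb.
rewrite -pseries_diffs_fact.
apply: (@pseries_snd_diffs _ _ (`|t| + 1)).
- exact: (pseries_fact_cvg B0 hb).
- rewrite pseries_diffs_fact; apply: (pseries_fact_cvg (M := M * B) B0).
  by move=> k; rewrite -mulrA -exprS; apply: hb.
- rewrite !pseries_diffs_fact; apply: (pseries_fact_cvg (M := M * B * B) B0).
  by move=> k; rewrite -!mulrA -!exprS; apply: hb.
- rewrite [X in _ < X]ger0_norm ?ltrDl // addr_ge0 //.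
Qed.

Lemma lim_series_first (f : nat -> R) :
  (forall k, (0 < k)%N -> f k = 0) -> limn (series f) = f 0%N.
Proof.
move=> hf; apply: cvg_lim => //; apply: cvg_near_cst; near=> N.
have hN : (0 < N)%N by near: N; exists 1%N.
rewrite /series /= -(prednK hN) big_nat_recl // big1 ?addr0 // => i _; exact: hf.
Unshelve. all: by end_near.
Qed.

Lemma cvg_sum_lin n (s : 'I_n -> nat -> R) (a : 'I_n -> R) :
  (forall l, cvgn (s l)) ->
  (fun N => \sum_(l < n) a l * s l N) @ \oo --> \sum_(l < n) a l * limn (s l).
Proof.
move=> hs.
elim: (index_enum _) => [|l r IH].
  under eq_fun do rewrite big_nil; rewrite big_nil; exact: cvg_cst.
under eq_fun do rewrite big_cons; rewrite big_cons.
apply: cvgD => //; apply: cvgMl_tmp; exact: hs.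
Qed.


Arguments pseries_fact_derive {b M B} t.

Lemma lim_pseries_lin n (c : 'I_n -> nat -> R) (a : 'I_n -> R) t :
  (forall l, cvgn (pseries (c l) t)) ->
  limn (pseries (fun k => \sum_(l < n) a l * c l k) t) =
  \sum_(l < n) a l * limn (pseries (c l) t).
Proof.
move=> hc.
have -> : pseries (fun k => \sum_(l < n) a l * c l k) t =
          (fun N => \sum_(l < n) a l * pseries (c l) t N).
  apply/funext => N; rewrite /pseries /series /=.
  under eq_bigr do rewrite mulr_suml.
  rewrite exchange_big /=; apply: eq_bigr => l _.
  by rewrite mulr_sumr; apply: eq_bigr => k _; rewrite mulrA.
by apply: cvg_lim => //; apply: cvg_sum_lin.
Qed.

Variable n : nat.
Variable A : 'M[R]_n.

Definition cre (i j : 'I_n) (k : nat) : R :=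
  if odd k then 0 else (-1) ^+ k./2 * mxpow A k i j.
Definition cim (i j : 'I_n) (k : nat) : R :=
  if odd k then (-1) ^+ k./2 * mxpow A k i j else 0.

Lemma UreE t i j : Ure A t i j = limn (pseries (fun k => cre i j k / k`!%:R) t).
Proof.
rewrite /Ure /pseries; congr (limn (series _)); apply/funext => k /=.
by rewrite /cre; case: (odd k); rewrite ?mul0r //; ring.
Qed.

Lemma UimE t i j : Uim A t i j = limn (pseries (fun k => cim i j k / k`!%:R) t).
Proof.
rewrite /Uim /pseries; congr (limn (series _)); apply/funext => k /=.
by rewrite /cim; case: (odd k); rewrite ?mul0r //; ring.
Qed.

Lemma mxpowS k i j : mxpow A k.+1 i j = \sum_l A i l * mxpow A k l j.
Proof. by rewrite /mxpow iterS mxE. Qed.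

Definition Bnd : R := \sum_i \sum_l `|A i l|.

Lemma Bnd_ge0 : 0 <= Bnd.
Proof. by apply: sumr_ge0 => i _; apply: sumr_ge0. Qed.

Lemma mxpow_bound k i j : `|mxpow A k i j| <= Bnd ^+ k.
Proof.
elim: k i j => [|k IH] i j.
  by rewrite /mxpow /= mxE expr0; case: (i == j); rewrite ?normr1 ?normr0.
rewrite mxpowS exprS.
apply: le_trans (ler_norm_sum _ _ _) _.
apply: le_trans (_ : \sum_l `|A i l| * Bnd ^+ k <= _).
  by apply: ler_sum => l _; rewrite normrM ler_wpM2l.
rewrite -mulr_suml ler_wpM2r ?exprn_ge0 ?Bnd_ge0 //.
rewrite [X in _ <= X](bigD1 i) //= lerDl sumr_ge0 // => i0 _; exact: sumr_ge0.
Qed.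

Lemma cre_bound i j k : `|cre i j k| <= 1 * Bnd ^+ k.
Proof.
rewrite mul1r /cre; case: (odd k); first by rewrite normr0 exprn_ge0 ?Bnd_ge0.
by rewrite normrM normrX normrN1 expr1n mul1r mxpow_bound.
Qed.

Lemma cim_bound i j k : `|cim i j k| <= 1 * Bnd ^+ k.
Proof.
rewrite mul1r /cim; case: (odd k); last by rewrite normr0 exprn_ge0 ?Bnd_ge0.
by rewrite normrM normrX normrN1 expr1n mul1r mxpow_bound.
Qed.

Lemma half_S_odd k : odd k -> k.+1./2 = (k./2).+1.
Proof. by move=> h; rewrite -uphalfE uphalf_half h. Qed.
Lemma half_S_even k : ~~ odd k -> k.+1./2 = k./2.
Proof. by move=> h; rewrite -uphalfE uphalf_half (negPf h). Qed.

Lemma cre_S i j k : cre i j k.+1 = \sum_l (- A i l) * cim l j k.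
Proof.
rewrite /cre /cim /=; case: (boolP (odd k)) => hk /=.
  rewrite mxE uphalf_half hk add1n exprS mulN1r mulNr mulr_sumr -sumrN.
  by apply: eq_bigr => l _; rewrite mulrCA mulNr.
by rewrite big1 // => l _; rewrite mulr0.
Qed.

Lemma cim_S i j k : cim i j k.+1 = \sum_l A i l * cre l j k.
Proof.
rewrite /cre /cim /=; case: (boolP (odd k)) => hk /=.
  by rewrite big1 // => l _; rewrite mulr0.
rewrite mxE uphalf_half (negPf hk) add0n mulr_sumr.
by apply: eq_bigr => l _; rewrite mulrCA.
Qed.


Lemma Ure_derive i j t :
  is_derive t (1:R) (fun t => Ure A t i j) (\sum_l (- A i l) * Uim A t l j).
Proof.
have -> : (fun t => Ure A t i j) =
   (fun x => limn (pseries (fun k => cre i j k / k`!%:R) x)).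
  by apply/funext => x; exact: UreE.
apply: is_derive_eq; first exact: (pseries_fact_derive t Bnd_ge0 (cre_bound i j)).
rewrite (_ : (fun k => cre i j k.+1 / k`!%:R) =
   fun k => \sum_l (- A i l) * (cim l j k / k`!%:R)); last first.
  by apply/funext => k; rewrite cre_S mulr_suml; apply: eq_bigr => l _; rewrite mulrA.
rewrite lim_pseries_lin; last by move=> l; exact: (pseries_fact_cvg Bnd_ge0 (cim_bound l j)).
by apply: eq_bigr => l _; rewrite UimE.
Qed.

Lemma Uim_derive i j t :
  is_derive t (1:R) (fun t => Uim A t i j) (\sum_l A i l * Ure A t l j).
Proof.
have -> : (fun t => Uim A t i j) =
   (fun x => limn (pseries (fun k => cim i j k / k`!%:R) x)).
  by apply/funext => x; exact: UimE.
apply: is_derive_eq; first exact: (pseries_fact_derive t Bnd_ge0 (cim_bound i j)).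
rewrite (_ : (fun k => cim i j k.+1 / k`!%:R) =
   fun k => \sum_l A i l * (cre l j k / k`!%:R)); last first.
  by apply/funext => k; rewrite cim_S mulr_suml; apply: eq_bigr => l _; rewrite mulrA.
rewrite lim_pseries_lin; last by move=> l; exact: (pseries_fact_cvg Bnd_ge0 (cre_bound l j)).
by apply: eq_bigr => l _; rewrite UreE.
Qed.

Lemma Ure0 i j : Ure A 0 i j = (i == j)%:R.
Proof.
rewrite UreE /pseries lim_series_first.
  by rewrite /= expr0 mulr1 /cre /= expr0 mul1r fact0 divr1 /mxpow /= mxE.
by move=> k hk /=; rewrite expr0n -(prednK hk) /= mulr0.
Qed.

Lemma Uim0 i j : Uim A 0 i j = 0.
Proof.
rewrite UimE /pseries lim_series_first.
  by rewrite /= /cim /= mul0r mul0r.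
by move=> k hk /=; rewrite expr0n -(prednK hk) /= mulr0.
Qed.

Hypothesis Asym : forall i l, A i l = A l i.

Lemma unitary j t : \sum_i (Ure A t i j ^+ 2 + Uim A t i j ^+ 2) = 1.
Proof.
pose h := fun i : 'I_n => (fun t => Ure A t i j) ^+ 2 + (fun t => Uim A t i j) ^+ 2.
have hE : forall t, \sum_i (Ure A t i j ^+ 2 + Uim A t i j ^+ 2) = (\sum_i h i) t.
  by move=> x; rewrite fct_sumE.
have D : forall x, is_derive x (1:R) (\sum_i h i) 0.
  move=> x; apply: is_derive_eq.
    apply: is_derive_sum => i; apply: is_deriveD; apply: is_deriveX.
      exact: Ure_derive.
    exact: Uim_derive.
  have scal : forall a b : R, a *: b = a * b by [].
  set X := fun i => Ure A x i j; set Y := fun i => Uim A x i j.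
  rewrite big_split /=.
  have e1 : \sum_i (2 * X i ^+ 1) *: \sum_l - A i l * Y l =
            - \sum_i \sum_l (2 * X i * A i l * Y l).
    rewrite -sumrN; apply: eq_bigr => i _; rewrite expr1 scal mulr_sumr -sumrN.
    by apply: eq_bigr => l _; ring.
  have e2 : \sum_i (2 * Y i ^+ 1) *: \sum_l A i l * X l =
            \sum_i \sum_l (2 * X i * A i l * Y l).
    rewrite [RHS]exchange_big; apply: eq_bigr => i _; rewrite expr1 scal mulr_sumr.
    by apply: eq_bigr => l _; rewrite (Asym l i); ring.
  by rewrite e1 e2 addNr.
rewrite hE (is_derive_0_is_cst t 0 D).
rewrite -hE (bigD1 j) //= Ure0 Uim0 eqxx big1 ?addr0; first by rewrite expr1n expr0n addr0.
by move=> i /negPf hi; rewrite Ure0 Uim0 hi expr0n addr0.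
Qed.


Lemma null_pow (x : 'I_n -> R) k j :
  (forall l, \sum_i x i * A i l = 0) -> \sum_i x i * mxpow A k.+1 i j = 0.
Proof.
move=> hx.
under eq_bigr do rewrite mxpowS mulr_sumr.
rewrite exchange_big big1 // => l _.
rewrite (eq_bigr (fun i => x i * A i l * mxpow A k l j)); last by move=> i _; rewrite mulrA.
by rewrite -mulr_suml hx mul0r.
Qed.

Lemma null_dot (x : 'I_n -> R) j t :
  (forall l, \sum_i x i * A i l = 0) -> \sum_i x i * Ure A t i j = x j.
Proof.
move=> hx.
rewrite (eq_bigr (fun i => x i * limn (pseries (fun k => cre i j k / k`!%:R) t)));
  last by move=> i _; rewrite UreE.
rewrite -lim_pseries_lin; last by move=> l; exact: (pseries_fact_cvg Bnd_ge0 (cre_bound l j)).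
rewrite /pseries lim_series_first /=.
  rewrite expr0 mulr1 (bigD1 j) //= big1 ?addr0.
    by rewrite /cre /= expr0 mul1r /mxpow /= mxE eqxx fact0 divr1 mulr1.
  move=> i /negPf hi; rewrite /cre /= /mxpow /= mxE. by rewrite hi mulr0 mul0r mulr0.
move=> k hk /=.
have -> : \sum_i x i * (cre i j k / k`!%:R) = (\sum_i x i * cre i j k) / k`!%:R.
  by rewrite mulr_suml; apply: eq_bigr => i _; rewrite mulrA.
suff -> : \sum_i x i * cre i j k = 0 by rewrite !mul0r.
rewrite /cre; case: (odd k); first by rewrite big1 // => i _; rewrite mulr0.
rewrite (eq_bigr (fun i => (-1) ^+ k./2 * (x i * mxpow A k i j))); last first.
  by move=> i _; rewrite mulrCA.
by rewrite -mulr_sumr -(prednK hk) null_pow ?mulr0.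
Qed.

Lemma cs (u v : 'I_n -> R) :
  (\sum_i u i * v i) ^+ 2 <= (\sum_i u i ^+ 2) * (\sum_i v i ^+ 2).
Proof.
have H : 0 <= \sum_i \sum_j (u i * v j - u j * v i) ^+ 2.
  by apply: sumr_ge0 => i _; apply: sumr_ge0 => j _; apply: sqr_ge0.
have E1 : \sum_i \sum_j (u i * v j - u j * v i) ^+ 2 =
   \sum_i \sum_j (u i ^+ 2 * v j ^+ 2) + \sum_i \sum_j (u j ^+ 2 * v i ^+ 2)
   - 2 * \sum_i \sum_j (u i * v i * (u j * v j)).
  rewrite mulr_sumr -big_split -sumrB; apply: eq_bigr => i _.
  rewrite mulr_sumr -big_split -sumrB; apply: eq_bigr => j _ /=; ring.
have E2 : \sum_i \sum_j (u i ^+ 2 * v j ^+ 2) = (\sum_i u i ^+ 2) * (\sum_i v i ^+ 2).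
  by rewrite mulr_suml; apply: eq_bigr => i _; rewrite mulr_sumr.
have E3 : \sum_i \sum_j (u j ^+ 2 * v i ^+ 2) = (\sum_i u i ^+ 2) * (\sum_i v i ^+ 2).
  by rewrite exchange_big.
have E4 : \sum_i \sum_j (u i * v i * (u j * v j)) = (\sum_i u i * v i) ^+ 2.
  by rewrite expr2 mulr_suml; apply: eq_bigr => i _; rewrite mulr_sumr.
move: H; rewrite E1 E2 E3 E4 => H.
lra.
Qed.

End Gen.

Section Path.
Variable R : realType.
Variables (n : nat) (alpha : R).
Hypotheses (hodd : odd n) (ha0 : alpha != 0).

Definition xn (k : nat) : R :=
  if odd k then 0 else if k == 0%N then 1 else (-1) ^+ k./2 / alpha.

Lemma path_sym (i l : 'I_n) :
  path_weighted n alpha i l = path_weighted n alpha l i.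
Proof. by rewrite !mxE (orbC (l.+1 == i :> nat)) (orbC ((l : nat) == 0%N)). Qed.

Lemma path_null (l : 'I_n) : \sum_(i < n) xn i * path_weighted n alpha i l = 0.
Proof.
case: (boolP (odd l)) => hl; last first.
  apply: big1 => i _; rewrite mxE /xn.
  case: (boolP (odd i)) => hi; first by rewrite mul0r.
  case: (boolP ((i.+1 == l :> nat) || (l.+1 == i :> nat))) => hc; last by rewrite mulr0.
  case/orP: hc => /eqP e.
    by move: hl; rewrite -e /= (negPf hi).
  by move: hi; rewrite -e /= (negPf hl).
set q := (l : nat)./2.
have hlq : (l : nat) = q.*2.+1.
  by rewrite -[LHS]odd_double_half hl.
have hl1 : (l.+1 < n)%N.
  have : l.+1 != n by apply/eqP => e; move: hodd; rewrite -e /= hl.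
  by rewrite ltn_neqAle => ->; rewrite ltn_ord.
have hl0 : (l.-1 < n)%N by apply: leq_ltn_trans (leq_pred l) (ltn_ord l).
pose i1 := Ordinal hl0; pose i2 := Ordinal hl1.
have ne21 : i2 != i1.
  by apply/eqP => /(congr1 val) /=; lia.
rewrite (bigD1 i1) //= (bigD1 i2) //= big1; last first.
  move=> i /andP[h1 h2]; rewrite mxE ifF ?mulr0 //.
  apply/negbTE; rewrite negb_or; apply/andP; split; apply/eqP => e.
    by move/eqP: h1; apply; apply: val_inj => /=; lia.
  by move/eqP: h2; apply; apply: val_inj => /=; lia.
rewrite !mxE /=.
have e1 : (l.-1 = q.*2)%N by lia.
have e2 : (l.+1 = q.*2.+2)%N by lia.
rewrite e1 e2 hlq /xn /= odd_double /= !eqxx /= doubleK.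
case: q {e1 e2 hlq} => [|q] /=.
  by rewrite expr1; ring.
by rewrite orbT [(-1) ^+ q.+2]exprS; ring.
Qed.


Lemma xn_sum p :
  \sum_(0 <= k < p.*2.+1) (xn k - (k == 0%N)%:R) ^+ 2 = p%:R / alpha ^+ 2.
Proof.
elim: p => [|p IH].
  by rewrite big_nat1 /xn /= subrr expr0n mul0r.
rewrite doubleS big_nat_recr //= big_nat_recr //= IH.
rewrite /xn /= odd_double /= doubleK subr0 subr0 expr0n addr0.
rewrite exprMn sqrr_sign mul1r exprVn -natr1; field.
exact: ha0.
Qed.

End Path.
Arguments xn {R}.
Arguments xn_sum {R alpha}.
Arguments path_null {R n alpha}.

Theorem proposition22 (R : realType) (n : nat) (hn : (3 <= n)%N) (hodd : odd n)
  (alpha : R) (halpha0 : alpha != 0)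
  (halpha : Num.sqrt ((n.-1)%:R / 2) < `|alpha|)
  (u1 : 'I_n) (hu1 : nat_of_ord u1 = 0%N) :
  sedentary (path_weighted n alpha) u1.
Proof.
set A := path_weighted n alpha.
set p := n./2.
have hnp : n = p.*2.+1 by rewrite -[LHS]odd_double_half hodd.
have a2 : 0 < alpha ^+ 2 by rewrite lt_def sqr_ge0 sqrf_eq0 halpha0.
have hp : p%:R < alpha ^+ 2.
  move: halpha; rewrite -sqrtr_sqr ltr_sqrt // hnp /= -muln2 natrM mulfK //.
set m := \sum_(i < n) (xn alpha i - (i == u1)%:R) ^+ 2.
have hm : m = p%:R / alpha ^+ 2.
  rewrite /m -(xn_sum halpha0 p) -hnp big_mkord; apply: eq_bigr => i _.
  by rewrite -(val_eqE i u1) /= hu1.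
have m1 : m < 1 by rewrite hm ltr_pdivrMr // mul1r.
have m0 : 0 <= m by apply: sumr_ge0 => i _; apply: sqr_ge0.
exists ((1 - m) / 2); split; first by lra.
split; first by lra.
move=> t _.
set X := fun i => Ure A t i u1.
set Y := fun i => Uim A t i u1.
have hsym : forall i l, A i l = A l i by move=> i l; apply: path_sym.
have hX : \sum_i X i ^+ 2 <= 1.
  have := @unitary R n A hsym u1 t; rewrite big_split /= => <-.
  by rewrite lerDl; apply: sumr_ge0 => i _; apply: sqr_ge0.
have h1 : \sum_(i < n) xn alpha i * X i = 1.
  rewrite /X (@null_dot R n A); first by rewrite hu1.
  by move=> l; apply: path_null.
have h2 : \sum_(i < n) (xn alpha i - (i == u1)%:R) * X i = 1 - X u1.
  under eq_bigr do rewrite mulrBl.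
  rewrite sumrB h1 (bigD1 u1) //= eqxx mul1r big1 ?addr0 // => i /negPf ->.
  by rewrite mul0r.
have hcs := @cs R n (fun i : 'I_n => xn alpha i - (i == u1)%:R) X.
rewrite /= h2 -/m in hcs.
have hc : (1 - X u1) ^+ 2 <= m.
  apply: le_trans hcs _; rewrite -[X in _ <= X]mulr1; apply: ler_wpM2l => //.
have ha : (1 - m) / 2 <= X u1 by nra.
rewrite /Uabs; apply: le_trans (_ : _ <= Num.sqrt (Ure A t u1 u1 ^+ 2)) _.
  by rewrite sqrtr_sqr; apply: le_trans ha (ler_norm _).
by apply: ler_wsqrtr; rewrite lerDl sqr_ge0.
Qed.
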